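(* Let $W_2\in\{M_2,S_2\}$ and let $\phi:W_2\to W_2$ be a linear map such that $\sigma_{\mathcal{K}}(\phi(A))=\sigma_{\mathcal{K}}(A)$ for all $A\in W_2$. Then for all $A\in W_2$, $$\sigma_{\mathcal{K}}^{int}(A)=\sigma_{\mathcal{K}}^{int}(\phi(A))\quad\text{and}\quad \sigma_{\mathcal{K}}^{bd}(A)=\sigma_{\mathcal{K}}^{bd}(\phi(A)).$$
   Context: $M_2$ is the space of real $2\times2$ matrices, $S_2$ the subspace of symmetric ones. The Lorentz cone in $\mathbb{R}^2$ is $\mathcal{K}=\{(x_1,x_2)^T:\ |x_1|\le x_2\}$. For $A\in M_2$, a real $\lambda$ is an L-eigenvalue of $A$ if there is a nonzero $x\in\mathcal{K}$ with $(A-\lambda I)x\in\mathcal{K}$ and $x^T(A-\lambda I)x=0$ ($x$ is an associated L-eigenvector); $\sigma_{\mathcal{K}}(A)$ is the set of L-eigenvalues. $\lambda$ is an interior L-eigenvalue if it has an associated L-eigenvector in the interior of $\mathcal{K}$, and a boundary L-eigenvalue if it has an associated L-eigenvector on the boundary of $\mathcal{K}$; $\sigma_{\mathcal{K}}^{int}(A)$ and $\sigma_{\mathcal{K}}^{bd}(A)$ denote the sets of interior and boundary L-eigenvalues. *)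

(* Defs.v *)
From mathcomp Require Import all_boot all_order all_algebra.
From mathcomp Require Import reals.
Set Implicit Arguments. Unset Strict Implicit. Unset Printing Implicit Defensive.
Import Order.TTheory GRing.Theory Num.Theory.
Local Open Scope ring_scope.

(* Lorentz cone K = {(x1,x2) : |x1| <= x2} in R^2; coordinates x 0 0 = x1, x 1 0 = x2. *)
Definition i0 : 'I_2 := ord0.
Definition i1 : 'I_2 := ord_max.

Definition lorentz {R : realType} (x : 'cV[R]_2) : Prop := `|x i0 0| <= x i1 0.
Definition lorentz_int {R : realType} (x : 'cV[R]_2) : Prop := `|x i0 0| < x i1 0.
Definition lorentz_bd {R : realType} (x : 'cV[R]_2) : Prop := `|x i0 0| = x i1 0.

Definition L_eigvec {R : realType} (A : 'M[R]_2) (l : R) (x : 'cV[R]_2) : Prop :=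
  x != 0 /\ lorentz x /\ lorentz ((A - l%:M) *m x) /\ (x^T *m ((A - l%:M) *m x)) 0 0 = 0.

Definition L_spec {R : realType} (A : 'M[R]_2) : R -> Prop :=
  fun l => exists x, L_eigvec A l x.
Definition L_spec_int {R : realType} (A : 'M[R]_2) : R -> Prop :=
  fun l => exists x, L_eigvec A l x /\ lorentz_int x.
Definition L_spec_bd {R : realType} (A : 'M[R]_2) : R -> Prop :=
  fun l => exists x, L_eigvec A l x /\ lorentz_bd x.

(* membership in W_2: if sym then S_2 else M_2 *)
Definition inW2 {R : realType} (sym : bool) (A : 'M[R]_2) : Prop :=
  if sym then A^T = A else True.

(* Main.v *)
Require Import Defs.
From mathcomp Require Import all_boot all_order all_algebra.
From mathcomp Require Import reals ring lra.
Import Order.TTheory GRing.Theory Num.Theory.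
Local Open Scope ring_scope.


Lemma two_neq0 {R : realType} : (2 : R) != 0.
Proof. by rewrite pnatr_eq0. Qed.

Definition ca {R : realType} (A : 'M[R]_2) := (A i0 i0 + A i0 i1 + A i1 i0 + A i1 i1) / 2.
Definition cb {R : realType} (A : 'M[R]_2) := (A i1 i0 + A i1 i1 - A i0 i0 - A i0 i1) / 2.
Definition cc {R : realType} (A : 'M[R]_2) := (A i0 i1 + A i1 i1 - A i0 i0 - A i1 i0) / 2.
Definition cd {R : realType} (A : 'M[R]_2) := (A i0 i0 - A i0 i1 - A i1 i0 + A i1 i1) / 2.

Definition bdP {R : realType} (a b c d l : R) : Prop :=
  (l = a /\ 0 <= b) \/ (l = d /\ 0 <= c).
Definition intP {R : realType} (a b c d l : R) : Prop :=
  (l - a) * (l - d) = b * c /\ (0 < b * (l - d) \/ (b = 0 /\ l = d)) /\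
  (0 < c * (l - a) \/ (c = 0 /\ l = a)).
Definition Sp {R : realType} (a b c d l : R) : Prop := bdP a b c d l \/ intP a b c d l.

Definition Lev {R : realType} (a b c d l P Q : R) : Prop :=
  (P != 0 \/ Q != 0) /\ 0 <= P /\ 0 <= Q /\ 0 <= (a-l)*P + c*Q /\ 0 <= b*P + (d-l)*Q /\
  P*((a-l)*P + c*Q) + Q*(b*P + (d-l)*Q) = 0.

Definition mkx {R : realType} (P Q : R) : 'cV[R]_2 :=
  \col_i (if i == i0 then P - Q else P + Q).

Lemma ord2P (i : 'I_2) : i = i0 \/ i = i1.
Proof. case: i => [[|[|n]] Hi]; [left|right|by []]; exact: val_inj. Qed.

Lemma mkx0 {R : realType} (P Q : R) : mkx P Q i0 0 = P - Q.
Proof. by rewrite mxE. Qed.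
Lemma mkx1 {R : realType} (P Q : R) : mkx P Q i1 0 = P + Q.
Proof. by rewrite mxE. Qed.

Lemma mkxE {R : realType} (x : 'cV[R]_2) :
  x = mkx ((x i1 0 + x i0 0)/2) ((x i1 0 - x i0 0)/2).
Proof.
apply/matrixP => i j; rewrite (ord1 j).
case: (ord2P i) => ->; rewrite ?mkx0 ?mkx1; by field.
Qed.

Lemma lorP {R : realType} (u v : R) : `|u - v| <= u + v <-> 0 <= u /\ 0 <= v.
Proof.
rewrite ler_norml; split.
  by move=> /andP[h1 h2]; split; lra.
by move=> [h1 h2]; apply/andP; split; lra.
Qed.

Lemma liftE : lift ord0 ord0 = i1 :> 'I_2.
Proof. exact: val_inj. Qed.

Lemma mulv_entry {R : realType} (A : 'M[R]_2) (x : 'cV[R]_2) i :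
  (A *m x) i 0 = A i i0 * x i0 0 + A i i1 * x i1 0.
Proof. by rewrite !mxE !big_ord_recl big_ord0 addr0 liftE. Qed.

Lemma tmul_entry {R : realType} (x y : 'cV[R]_2) :
  (x^T *m y) 0 0 = x i0 0 * y i0 0 + x i1 0 * y i1 0.
Proof. by rewrite !mxE !big_ord_recl big_ord0 addr0 !mxE liftE. Qed.

Lemma subl_entry {R : realType} (A : 'M[R]_2) (l : R) i j :
  (A - l%:M) i j = A i j - (if i == j then l else 0).
Proof. by rewrite !mxE; case: (i == j). Qed.

Lemma mkx_neq0 {R : realType} (P Q : R) : mkx P Q != 0 <-> (P != 0 \/ Q != 0).
Proof.
split.
  move=> h; case: (eqVneq P 0) => hP; last by left.
  case: (eqVneq Q 0) => hQ; last by right.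
  exfalso; move/negP: h; apply; apply/eqP/matrixP => i j; rewrite (ord1 j) !mxE.
  by case: (i == i0); rewrite hP hQ ?subr0 ?addr0.
move=> h; apply/negP => /eqP h0.
have e0 := mkx0 P Q; have e1 := mkx1 P Q.
rewrite h0 mxE in e0; rewrite h0 mxE in e1.
have hP : P = 0 by lra.
have hQ : Q = 0 by lra.
by case: h; rewrite ?hP ?hQ eqxx.
Qed.

Lemma Lev_mkx {R : realType} (A : 'M[R]_2) l P Q :
  L_eigvec A l (mkx P Q) <-> Lev (ca A) (cb A) (cc A) (cd A) l P Q.
Proof.
set Y1 := (ca A - l) * P + cc A * Q.
set Y2 := cb A * P + (cd A - l) * Q.
have ey0 : ((A - l%:M) *m mkx P Q) i0 0 = Y1 - Y2.
  rewrite mulv_entry !subl_entry mkx0 mkx1 /= /Y1 /Y2 /ca /cb /cc /cd; by field.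
have ey1 : ((A - l%:M) *m mkx P Q) i1 0 = Y1 + Y2.
  rewrite mulv_entry !subl_entry mkx0 mkx1 /= /Y1 /Y2 /ca /cb /cc /cd; by field.
have et : ((mkx P Q)^T *m ((A - l%:M) *m mkx P Q)) 0 0 = 2 * (P * Y1 + Q * Y2).
  rewrite tmul_entry ey0 ey1 mkx0 mkx1; by ring.
rewrite /L_eigvec /lorentz /Lev et ey0 ey1 mkx0 mkx1 mkx_neq0 !lorP.
split.
  move=> [h1 [[h2 h3] [[h4 h5] h6]]]; do 5 (split; first done).
  move: h6 => /eqP; rewrite mulf_eq0 pnatr_eq0 /= => /eqP; done.
move=> [h1 [h2 [h3 [h4 [h5 h6]]]]]; do 3 (split; first done).
by rewrite h6 mulr0.
Qed.

Lemma Lev_of {R : realType} (a b c d l P Q : R) :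
  0 < P -> 0 < Q -> (a-l)*P + c*Q = 0 -> b*P + (d-l)*Q = 0 -> Lev a b c d l P Q.
Proof.
move=> hP hQ e1 e2; rewrite /Lev e1 e2 !mulr0 addr0.
split; first by left; rewrite gt_eqF.
by split; [exact: ltW|split; [exact: ltW|]].
Qed.

Lemma sq0 {R : realType} {Q x : R} : 0 < Q -> Q * (x * Q) = 0 -> x = 0.
Proof.
move=> hQ /eqP; rewrite mulf_eq0 (gt_eqF hQ) /= mulf_eq0 (gt_eqF hQ) orbF => /eqP //.
Qed.

Lemma Lev_bd {R : realType} (a b c d l : R) :
  (exists P Q, Lev a b c d l P Q /\ (P = 0 \/ Q = 0)) <-> bdP a b c d l.
Proof.
split.
  move=> [P [Q [[h1 [h2 [h3 [h4 [h5 h6]]]]] [hP|hQ]]]].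
    subst P; case: h1 => [/eqP//|hQ].
    have hQ' : 0 < Q by rewrite lt_def hQ h3.
    right; rewrite !mul0r !add0r !mulr0 !add0r in h4 h5 h6.
    have := sq0 hQ' h6; move/eqP; rewrite subr_eq0 => /eqP ->.
    split => //; by rewrite -(pmulr_lge0 _ hQ').
  subst Q; case: h1 => [hP|/eqP//].
  have hP' : 0 < P by rewrite lt_def hP h2.
  left; rewrite !mul0r !mulr0 !addr0 in h4 h5 h6.
  have := sq0 hP' h6; move/eqP; rewrite subr_eq0 => /eqP <-.
  split => //; by rewrite -(pmulr_lge0 _ hP').
move=> [[-> hb]|[-> hc]].
  exists 1, 0; split; last by right.
  rewrite /Lev subrr; split; first by left; rewrite oner_eq0.
  by rewrite !(mul0r, mulr0, mul1r, mulr1, addr0, add0r); do !split; rewrite ?ler01 ?lexx.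
exists 0, 1; split; last by left.
rewrite /Lev subrr; split; first by right; rewrite oner_eq0.
by rewrite !(mul0r, mulr0, mul1r, mulr1, addr0, add0r); do !split; rewrite ?ler01 ?lexx.
Qed.

Lemma Lev_int {R : realType} (a b c d l : R) :
  (exists P Q, Lev a b c d l P Q /\ (0 < P /\ 0 < Q)) <-> intP a b c d l.
Proof.
split.
  move=> [P [Q [[h1 [h2 [h3 [h4 [h5 h6]]]]] [hP hQ]]]].
  have m1 : 0 <= P * ((a - l) * P + c * Q) by apply: mulr_ge0.
  have m2 : 0 <= Q * (b * P + (d - l) * Q) by apply: mulr_ge0.
  have z1 : P * ((a - l) * P + c * Q) = 0 by lra.
  have z2 : Q * (b * P + (d - l) * Q) = 0 by lra.
  move/eqP: z1; rewrite mulf_eq0 (gt_eqF hP) /= => /eqP e1.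
  move/eqP: z2; rewrite mulf_eq0 (gt_eqF hQ) /= => /eqP e2.
  split.
    have : ((l - a) * (l - d) - b * c) * (P * Q) = 0.
      have E1 : (l - a) * P = c * Q by lra.
      have E2 : (l - d) * Q = b * P by lra.
      have -> : ((l - a) * (l - d) - b * c) * (P * Q) = ((l - a) * P) * ((l - d) * Q) - b * c * (P * Q) by ring.
      rewrite E1 E2; ring.
    move/eqP; rewrite mulf_eq0 mulf_eq0 (gt_eqF hP) (gt_eqF hQ) !orbF subr_eq0 => /eqP //.
  split.
    case: (eqVneq b 0) => hb.
      right; split => //; rewrite hb mul0r add0r in e2.
      have := sq0 hQ (eq_trans (congr1 (fun z => Q * z) e2) (mulr0 Q)).
      by move/eqP; rewrite subr_eq0 => /eqP.
    left.
    have E : b * (l - d) * Q = b ^+ 2 * P.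
      have E2 : (l - d) * Q = b * P by lra.
      by rewrite -mulrA E2 mulrA expr2.
    have : 0 < b ^+ 2 * P by apply: mulr_gt0 => //; rewrite exprn_even_gt0.
    by rewrite -E pmulr_lgt0.
  case: (eqVneq c 0) => hc.
    right; split => //; rewrite hc mul0r addr0 in e1.
    have := sq0 hP (eq_trans (congr1 (fun z => P * z) e1) (mulr0 P)).
    by move/eqP; rewrite subr_eq0 => /eqP.
  left.
  have E : c * (l - a) * P = c ^+ 2 * Q.
    have E1 : (l - a) * P = c * Q by lra.
    by rewrite -mulrA E1 mulrA expr2.
  have : 0 < c ^+ 2 * Q by apply: mulr_gt0 => //; rewrite exprn_even_gt0.
  by rewrite -E pmulr_lgt0.
move=> [hdet [hb hc]].
case: hb => [hb|[hb hld]].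
  have b0 : b != 0 by apply/eqP => b0; rewrite b0 mul0r ltxx in hb.
  exists (b * (l - d)), (b ^+ 2); split; last by split => //; rewrite exprn_even_gt0.
  apply: Lev_of => //; first by rewrite exprn_even_gt0.
    have -> : (a - l) * (b * (l - d)) + c * b ^+ 2 = b * (b * c - (l - a) * (l - d)) by ring.
    by rewrite hdet subrr mulr0.
  ring.
case: hc => [hc|[hc hla]].
  exists (c ^+ 2), (c * (l - a)); split.
    have c0 : c != 0 by apply/eqP => c0; rewrite c0 mul0r ltxx in hc.
    apply: Lev_of => //; first by rewrite exprn_even_gt0.
      ring.
    rewrite hb hld; ring.
  split => //.
  have c0 : c != 0 by apply/eqP => c0; rewrite c0 mul0r ltxx in hc.
  by rewrite exprn_even_gt0.
exists 1, 1; split; last by split; rewrite ltr01.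
apply: Lev_of; rewrite ?ltr01 //.
  by rewrite hc hla; ring.
by rewrite hb hld; ring.
Qed.

Lemma lor_int_mkx {R : realType} (P Q : R) : lorentz_int (mkx P Q) <-> 0 < P /\ 0 < Q.
Proof.
rewrite /lorentz_int mkx0 mkx1 ltr_norml; split.
  by move=> /andP[h1 h2]; split; lra.
by move=> [h1 h2]; apply/andP; split; lra.
Qed.

Lemma lor_bd_mkx {R : realType} {P Q : R} : 0 <= P -> 0 <= Q ->
  lorentz_bd (mkx P Q) <-> P = 0 \/ Q = 0.
Proof.
move=> hP hQ; rewrite /lorentz_bd mkx0 mkx1; split.
  case: (lerP 0 (P - Q)) => h.
    rewrite ger0_norm // => e; right; lra.
  rewrite ltr0_norm // => e; left; lra.
case=> ->; rewrite ?sub0r ?subr0 ?add0r ?addr0 ?normrN ger0_norm //.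
Qed.

Lemma Lev_nonneg {R : realType} {a b c d l P Q : R} : Lev a b c d l P Q -> 0 <= P /\ 0 <= Q.
Proof. by move=> [_ [h2 [h3 _]]]. Qed.

Lemma specE {R : realType} (A : 'M[R]_2) l :
  L_spec A l <-> Sp (ca A) (cb A) (cc A) (cd A) l.
Proof.
split.
  move=> [x hx]; rewrite (mkxE x) Lev_mkx in hx.
  move: hx; set P := (_ / 2); set Q := (_ / 2) => hx.
  have [hP hQ] := Lev_nonneg hx.
  case: (eqVneq P 0) => eP.
    left; apply/Lev_bd; exists P, Q; split => //; by left.
  case: (eqVneq Q 0) => eQ.
    left; apply/Lev_bd; exists P, Q; split => //; by right.
  right; apply/Lev_int; exists P, Q; split => //; split; by rewrite lt_def ?eP ?eQ.
case.
  move=> /Lev_bd [P [Q [h _]]]; exists (mkx P Q); by apply/Lev_mkx.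
move=> /Lev_int [P [Q [h _]]]; exists (mkx P Q); by apply/Lev_mkx.
Qed.

Lemma intE {R : realType} (A : 'M[R]_2) l :
  L_spec_int A l <-> intP (ca A) (cb A) (cc A) (cd A) l.
Proof.
split.
  move=> [x [hx hi]]; rewrite (mkxE x) Lev_mkx in hx; rewrite (mkxE x) lor_int_mkx in hi.
  apply/Lev_int; by do 2 eexists; split; eauto.
move=> /Lev_int [P [Q [h hi]]]; exists (mkx P Q); split; first by apply/Lev_mkx.
by apply/lor_int_mkx.
Qed.

Lemma bdE {R : realType} (A : 'M[R]_2) l :
  L_spec_bd A l <-> bdP (ca A) (cb A) (cc A) (cd A) l.
Proof.
split.
  move=> [x [hx hi]]; rewrite (mkxE x) Lev_mkx in hx; rewrite (mkxE x) in hi.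
  have [hP hQ] := Lev_nonneg hx.
  rewrite (lor_bd_mkx hP hQ) in hi.
  apply/Lev_bd; by do 2 eexists; split; eauto.
move=> /Lev_bd [P [Q [h hi]]]; exists (mkx P Q); split; first by apply/Lev_mkx.
have [hP hQ] := Lev_nonneg h.
by apply/lor_bd_mkx.
Qed.

Definition Ns {R : realType} (a b c d l : R) := Sp (-a) (-b) (-c) (-d) (-l).

Lemma int_neg {R : realType} (a b c d l : R) :
  intP a b c d l <-> intP (-a) (-b) (-c) (-d) (-l).
Proof.
rewrite /intP !opprK.
have -> : (- l + a) * (- l + d) = (l - a) * (l - d) by ring.
have -> : - b * - c = b * c by ring.
have -> : - b * (- l + d) = b * (l - d) by ring.
have -> : - c * (- l + a) = c * (l - a) by ring.
split; move=> [h1 [h2 h3]]; split => //; split.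
- by case: h2 => [?|[? ?]]; [left|right; split]; lra.
- by case: h3 => [?|[? ?]]; [left|right; split]; lra.
- by case: h2 => [?|[? ?]]; [left|right; split]; lra.
- by case: h3 => [?|[? ?]]; [left|right; split]; lra.
Qed.

Lemma int_Ns {R : realType} {a b c d l : R} : intP a b c d l -> Ns a b c d l.
Proof. by move=> h; rewrite /Ns; right; exact: (proj1 (int_neg _ _ _ _ _) h). Qed.

Lemma Ns_pos {R : realType} {a b d l : R} : 0 < b -> Ns a b b d l -> intP a b b d l.
Proof.
move=> hb [[[_ h]|[_ h]]|h]; try lra.
exact: (proj2 (int_neg a b b d l) h).
Qed.

Lemma Sp_neg {R : realType} {a b d l : R} : b < 0 -> Sp a b b d l -> intP a b b d l.
Proof. by move=> hb [[[_ h]|[_ h]]|h] //; lra. Qed.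

Lemma int_pos_gt {R : realType} {a b d l : R} : 0 < b -> intP a b b d l -> a < l /\ d < l.
Proof.
move=> hb [_ [h1 h2]].
case: h1 => [h1|[h1 _]]; last lra.
case: h2 => [h2|[h2 _]]; last lra.
rewrite pmulr_rgt0 // in h1; rewrite pmulr_rgt0 // in h2; split; lra.
Qed.

Lemma int_neg_lt {R : realType} {a b d l : R} : b < 0 -> intP a b b d l -> l < a /\ l < d.
Proof.
move=> hb [_ [h1 h2]].
case: h1 => [h1|[h1 _]]; last lra.
case: h2 => [h2|[h2 _]]; last lra.
rewrite nmulr_rgt0 // in h1; rewrite nmulr_rgt0 // in h2; split; lra.
Qed.

Lemma int_uniq {R : realType} {a b d l l' : R} : b != 0 ->
  intP a b b d l -> intP a b b d l' -> l' = l.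
Proof.
move=> hb h h'.
have key : (l - l') * (l + l' - a - d) = 0.
  have -> : (l - l') * (l + l' - a - d) = (l - a) * (l - d) - (l' - a) * (l' - d) by ring.
  by rewrite h.1 h'.1 subrr.
have s : 0 < l + l' - a - d \/ l + l' - a - d < 0.
  case: (ltrgtP 0 b) hb => hb0 hb //.
    have := int_pos_gt hb0 h; have := int_pos_gt hb0 h'; lra.
  have := int_neg_lt hb0 h; have := int_neg_lt hb0 h'; lra.
move/eqP: key; rewrite mulf_eq0; case/orP => /eqP e; first lra.
by case: s; lra.
Qed.

Lemma Sp_b0 {R : realType} (a d l : R) : Sp a 0 0 d l <-> l = a \/ l = d.
Proof.
split.
  move=> [[[h _]|[h _]]|[_ [h1 h2]]]; [by left|by right|].
  case: h1 => [|[_ h]]; first by rewrite mul0r ltxx.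
  by right.
by case=> h; left; [left|right]; split.
Qed.

Lemma Ns_b0 {R : realType} (a d l : R) : Ns a 0 0 d l <-> l = a \/ l = d.
Proof.
rewrite /Ns oppr0 Sp_b0; split; case=> h; [left|right|left|right]; lra.
Qed.

Lemma int_b0 {R : realType} (a d l : R) : intP a 0 0 d l <-> l = a /\ l = d.
Proof.
split.
  move=> [_ [h1 h2]]; case: h1 => [|[_ h1]]; first by rewrite mul0r ltxx.
  case: h2 => [|[_ h2]]; first by rewrite mul0r ltxx.
  by [].
move=> [h1 h2]; split; first by rewrite h1 subrr mul0r mul0r.
by split; right.
Qed.

Lemma symR1 {R : realType} (a b d l : R) : intP a b b d l <->
  (Sp a b b d l /\ Ns a b b d l /\ forall l', Sp a b b d l' -> Ns a b b d l' -> l' = l).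
Proof.
split.
  move=> h; split; first by right.
  split; first exact: int_Ns.
  move=> l' s n.
  case: (ltrgtP 0 b) => hb.
  - by apply: (int_uniq _ h (Ns_pos hb n)); rewrite gt_eqF.
  - by apply: (int_uniq _ h (Sp_neg hb s)); rewrite lt_eqF.
  - subst b; move/int_b0: h => [h1 h2]; move/Sp_b0: s; lra.
move=> [s [n u]].
case: (ltrgtP 0 b) => hb.
- exact: Ns_pos.
- exact: Sp_neg.
- subst b; apply/int_b0.
  have ea := u a (proj2 (Sp_b0 a d a) (or_introl erefl)) (proj2 (Ns_b0 a d a) (or_introl erefl)).
  have ed := u d (proj2 (Sp_b0 a d d) (or_intror erefl)) (proj2 (Ns_b0 a d d) (or_intror erefl)).
  by split.
Qed.

Lemma symR2 {R : realType} (a b d l : R) : bdP a b b d l <->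
  (Sp a b b d l /\ (~ Ns a b b d l \/ forall l', Sp a b b d l' <-> Ns a b b d l')).
Proof.
split.
  move=> h; split; first by left.
  case: (ltrgtP 0 b) => hb.
  - left => n; have := int_pos_gt hb (Ns_pos hb n); case: h => [[-> _]|[-> _]]; lra.
  - by case: h => [[_ ?]|[_ ?]]; lra.
  - subst b; right => l'; by rewrite Sp_b0 Ns_b0.
move=> [[//|hi] hn].
case: (eqVneq b 0) => [b0|bn0].
  subst b; move/int_b0: hi => [h1 h2]; left; split => //.
exfalso.
case: hn => [hn|heq]; first exact: hn (int_Ns hi).
case: (ltrgtP 0 b) => hb.
- have sa : Sp a b b a a by left; left; split => //; exact: ltW.
  have : Sp a b b d a by left; left; split => //; exact: ltW.
  move/heq/(Ns_pos hb)/(int_pos_gt hb) => [h _]; lra.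
- have : Ns a b b d a by left; left; split => //; rewrite oppr_ge0 ltW.
  move/heq/(Sp_neg hb)/(int_neg_lt hb) => [h _]; lra.
- by rewrite hb eqxx in bn0.
Qed.
Lemma caseB {R : realType} (b1 c1 b2 c2 : R) :
  (b1+b2)*(c1+c2) = 1 -> (b1+4*b2)*(c1+4*c2) = 4 -> (4*b1+b2)*(4*c1+c2) = 4 ->
  0 < b1+b2 ->
  (0 < b1 /\ c1 = 0 /\ b2 = 0 /\ 0 < c2 /\ b1*c2 = 1) \/
  (b1 = 0 /\ 0 < c1 /\ 0 < b2 /\ c2 = 0 /\ b2*c1 = 1).
Proof.
move=> h1 h2 h3 hp.
have e1 : b1*c1 + (b1*c2 + b2*c1) + b2*c2 = 1.
  rewrite -[RHS]h1; ring.
have e2 : b1*c1 + 4*(b1*c2 + b2*c1) + 16*(b2*c2) = 4.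
  rewrite -[RHS]h2; ring.
have e3 : 16*(b1*c1) + 4*(b1*c2 + b2*c1) + b2*c2 = 4.
  rewrite -[RHS]h3; ring.
have u0 : b1*c1 = 0 by lra.
have w0 : b2*c2 = 0 by lra.
have v1 : b1*c2 + b2*c1 = 1 by lra.
move/eqP: u0; rewrite mulf_eq0 => /orP[/eqP b10|/eqP c10].
  right; rewrite b10 mul0r add0r in v1; rewrite b10 add0r in hp.
  have c20 : c2 = 0.
    move/eqP: w0; rewrite mulf_eq0 (gt_eqF hp) /= => /eqP //.
  split => //; split; last by split.
  by rewrite -(pmulr_rgt0 _ hp) v1 ltr01.
left; rewrite c10 mulr0 addr0 in v1.
have b1n : b1 != 0 by apply/eqP => h; rewrite h mul0r in v1; move/eqP: v1; rewrite eq_sym oner_eq0.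
have c2n : c2 != 0 by apply/eqP => h; rewrite h mulr0 in v1; move/eqP: v1; rewrite eq_sym oner_eq0.
have b20 : b2 = 0.
  by move/eqP: w0; rewrite mulf_eq0 (negPf c2n) orbF => /eqP.
rewrite b20 addr0 in hp.
split => //; split => //; split => //; split => //.
by rewrite -(pmulr_rgt0 _ hp) v1 ltr01.
Qed.

Lemma caseC {R : realType} (x y be ga : R) :
  (x + 1*be) * (y + 1*ga) = 1 -> (x + 2*be) * (y + 2*ga) = 4 -> be * ga = 1 ->
  0 < be -> 0 < ga -> x = 0 /\ y = 0.
Proof.
move=> h1 h2 hbg hb hg.
have e1 : x*y + (x*ga + be*y) + be*ga = 1.
  rewrite -[RHS]h1; ring.
have e2 : x*y + 2*(x*ga + be*y) + 4*(be*ga) = 4.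
  rewrite -[RHS]h2; ring.
have u0 : x*y = 0 by lra.
have v0 : x*ga + be*y = 0 by lra.
move/eqP: u0; rewrite mulf_eq0 => /orP[/eqP x0|/eqP y0].
  rewrite x0 mul0r add0r in v0; split => //.
  by move/eqP: v0; rewrite mulf_eq0 (gt_eqF hb) => /eqP.
rewrite y0 mulr0 addr0 in v0; split => //.
by move/eqP: v0; rewrite mulf_eq0 (gt_eqF hg) orbF => /eqP.
Qed.

Lemma caseD {R : realType} (x y Vb Vc be ga : R) :
  be * ga = 1 -> 0 < be -> 0 < ga ->
  (2 - x) * (2 - y) = (Vb + 1*be) * (Vc + 3*ga) ->
  (2 - x) * (2 - y) = (Vb + 3*be) * (Vc + 1*ga) ->
  (3 - x) * (3 - y) = (Vb + 2*be) * (Vc + 4*ga) ->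
  (3 - x) * (3 - y) = (Vb + 1*be) * (Vc + 8*ga) ->
  Vb = 0 /\ Vc = 0 /\ x + y = 0 /\ x * y = -1.
Proof.
move=> hbg hb hg E1 E2 E3 E4.
have F1 : (2 - x)*(2 - y) - (Vb + 1*be)*(Vc + 3*ga) = 4 - 2*(x+y) + x*y - Vb*Vc - 3*(Vb*ga) - be*Vc - 3*(be*ga) by ring.
have F2 : (2 - x)*(2 - y) - (Vb + 3*be)*(Vc + 1*ga) = 4 - 2*(x+y) + x*y - Vb*Vc - (Vb*ga) - 3*(be*Vc) - 3*(be*ga) by ring.
have F3 : (3 - x)*(3 - y) - (Vb + 2*be)*(Vc + 4*ga) = 9 - 3*(x+y) + x*y - Vb*Vc - 4*(Vb*ga) - 2*(be*Vc) - 8*(be*ga) by ring.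
have F4 : (3 - x)*(3 - y) - (Vb + 1*be)*(Vc + 8*ga) = 9 - 3*(x+y) + x*y - Vb*Vc - 8*(Vb*ga) - (be*Vc) - 8*(be*ga) by ring.
rewrite E1 subrr in F1; rewrite E2 subrr in F2; rewrite E3 subrr in F3; rewrite E4 subrr in F4.
rewrite hbg in F1 F2 F3 F4.
have A1 : Vb * ga = 0 by lra.
have A2 : be * Vc = 0 by lra.
have T : x + y = 0 by lra.
have vb0 : Vb = 0 by move/eqP: A1; rewrite mulf_eq0 (gt_eqF hg) orbF => /eqP.
have vc0 : Vc = 0 by move/eqP: A2; rewrite mulf_eq0 (gt_eqF hb) => /eqP.
split => //; split => //; split => //.
rewrite vb0 mul0r in F1; lra.
Qed.

Lemma Sp_eq {R : realType} {a b c d l : R} a' b' c' d' :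
  Sp a b c d l -> a = a' -> b = b' -> c = c' -> d = d' -> Sp a' b' c' d' l.
Proof. by move=> h ea eb ec ed; rewrite -ea -eb -ec -ed. Qed.

Lemma Zlem {R : realType} (mu b c l : R) : b * c <= 0 -> Sp mu b c mu l -> l = mu.
Proof.
move=> hbc [[[-> _]|[-> _]]|[h _]] //.
have : 0 <= (l - mu) * (l - mu) by rewrite -expr2 sqr_ge0.
rewrite h => h'.
have : (l - mu) * (l - mu) = 0 by lra.
by move/eqP; rewrite mulf_eq0 orbb subr_eq0 => /eqP.
Qed.

Lemma L_aN {R : realType} (a b c d : R) : Sp a b c d a \/ Sp (-a) (-b) (-c) (-d) (-a).
Proof.
case: (lerP 0 b) => hb; first by left; left; left.
by right; left; left; split => //; rewrite oppr_ge0 ltW.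
Qed.

Lemma L_dN {R : realType} (a b c d : R) : Sp a b c d d \/ Sp (-a) (-b) (-c) (-d) (-d).
Proof.
case: (lerP 0 c) => hc; first by left; left; right.
by right; left; right; split => //; rewrite oppr_ge0 ltW.
Qed.

Lemma A_lemma {R : realType} (x1 x2 x3 x4 mu : R) :
  (forall l, Sp x1 x2 x3 x4 l -> l = mu) ->
  (forall l, Sp (-x1) (-x2) (-x3) (-x4) l -> l = - mu) -> x1 = mu /\ x4 = mu.
Proof.
move=> h1 h2; split.
  case: (L_aN x1 x2 x3 x4) => h; first exact: h1.
  by apply: oppr_inj; apply: h2.
case: (L_dN x1 x2 x3 x4) => h; first exact: h1.
by apply: oppr_inj; apply: h2.
Qed.

Lemma pm1_lemma {R : realType} (x1 x2 x3 x4 : R) :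
  (forall l, Sp x1 x2 x3 x4 l -> l = 1 \/ l = -1) ->
  (forall l, Sp (-x1) (-x2) (-x3) (-x4) l -> l = 1 \/ l = -1) ->
  (x1 = 1 \/ x1 = -1) /\ (x4 = 1 \/ x4 = -1).
Proof.
move=> h1 h2; split.
  case: (L_aN x1 x2 x3 x4) => h; first exact: h1.
  by case: (h2 _ h) => e; [right|left]; lra.
case: (L_dN x1 x2 x3 x4) => h; first exact: h1.
by case: (h2 _ h) => e; [right|left]; lra.
Qed.

Lemma O1 {R : realType} {mu b c l : R} : Sp mu b c mu l -> l != mu ->
  (l - mu) * (l - mu) = b * c /\ 0 < b * (l - mu) /\ 0 < c * (l - mu).
Proof.
move=> [[[e _]|[e _]]|[h1 [h2 h3]]] ne; try by rewrite e eqxx in ne.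
split => //; split.
  by case: h2 => // [[_ e]]; rewrite e eqxx in ne.
by case: h3 => // [[_ e]]; rewrite e eqxx in ne.
Qed.

Lemma memO {R : realType} (mu b c l : R) :
  (l - mu) * (l - mu) = b * c -> 0 < b * (l - mu) -> 0 < c * (l - mu) -> Sp mu b c mu l.
Proof. by move=> h1 h2 h3; right; split => //; split; left. Qed.

Lemma memI {R : realType} (a b c d l : R) :
  (l - a) * (l - d) = b * c -> 0 < b * (l - d) -> 0 < c * (l - a) -> Sp a b c d l.
Proof. by move=> h1 h2 h3; right; split => //; split; left. Qed.

Lemma notSpH {R : realType} : ~ Sp (1 : R) (-1) 0 (-1) 1.
Proof.
move=> [[[_ h]|[h _]]|[_ [h _]]]; lra.
Qed.

Lemma finalI {R : realType} (k mm a b c d l : R) : 0 < k -> 0 < mm -> k * mm = 1 ->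
  (intP a b c d l <-> intP a (b*k) (c* mm) d l) /\ (bdP a b c d l <-> bdP a (b*k) (c* mm) d l).
Proof.
move=> hk hm hkm.
have E1 : b*k*(c* mm) = b*c by rewrite -[RHS]mulr1 -hkm; ring.
have E2 : forall z, (0 < b*k*z) = (0 < b*z) by move=> z; rewrite mulrAC pmulr_lgt0.
have E3 : forall z, (0 < c* mm*z) = (0 < c*z) by move=> z; rewrite mulrAC pmulr_lgt0.
have E4 : (b*k = 0) <-> (b = 0).
  by split => [/eqP|->]; [rewrite mulf_eq0 (gt_eqF hk) orbF => /eqP|rewrite mul0r].
have E5 : (c* mm = 0) <-> (c = 0).
  by split => [/eqP|->]; [rewrite mulf_eq0 (gt_eqF hm) orbF => /eqP|rewrite mul0r].
have E6 : (0 <= b*k) = (0 <= b) by rewrite pmulr_lge0.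
have E7 : (0 <= c* mm) = (0 <= c) by rewrite pmulr_lge0.
rewrite /intP /bdP E1 E2 E3 E6 E7; split; split.
- by move=> [h1 [h2 h3]]; split => //; split; [case: h2 => [?|[? ?]]; [left|right; split => //; apply/E4] | case: h3 => [?|[? ?]]; [left|right; split => //; apply/E5]].
- by move=> [h1 [h2 h3]]; split => //; split; [case: h2 => [?|[/E4 ? ?]]; [left|right; split => //] | case: h3 => [?|[/E5 ? ?]]; [left|right; split => //]].
- by [].
- by [].
Qed.

Lemma finalII {R : realType} (k mm a b c d l : R) : 0 < k -> 0 < mm -> k * mm = 1 ->
  (intP a b c d l <-> intP d (c* mm) (b*k) a l) /\ (bdP a b c d l <-> bdP d (c* mm) (b*k) a l).
Proof.
move=> hk hm hkm.
have [h1 h2] := finalI k mm a b c d l hk hm hkm.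
rewrite h1 h2 /intP /bdP.
have -> : c * mm * (b * k) = b * k * (c * mm) by ring.
have -> : (l - d) * (l - a) = (l - a) * (l - d) by ring.
split; split.
- by move=> [? [? ?]]; do !split => //.
- by move=> [? [? ?]]; do !split => //.
- by case=> ?; [right|left].
- by case=> ?; [right|left].
Qed.

Definition lin4 {R : realType} (u v p q s t b c : R) := s * u + t * v + b * p + c * q.

Ltac simp h := rewrite /lin4 ?(mul0r, mulr0, mul1r, mulN1r, add0r, addr0, subr0, sub0r, opprK, oppr0) in h.

Lemma M2_main {R : realType} (Ua Ub Uc Ud Va Vb Vc Vd Pa Pb Pc Pd Qa Qb Qc Qd : R) :
 (forall s t b c l, Sp (lin4 Ua Va Pa Qa s t b c) (lin4 Ub Vb Pb Qb s t b c)
     (lin4 Uc Vc Pc Qc s t b c) (lin4 Ud Vd Pd Qd s t b c) l <-> Sp (s+t) b c (s-t) l) ->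
 forall s t b c l,
   (intP (s+t) b c (s-t) l <-> intP (lin4 Ua Va Pa Qa s t b c) (lin4 Ub Vb Pb Qb s t b c)
     (lin4 Uc Vc Pc Qc s t b c) (lin4 Ud Vd Pd Qd s t b c) l) /\
   (bdP (s+t) b c (s-t) l <-> bdP (lin4 Ua Va Pa Qa s t b c) (lin4 Ub Vb Pb Qb s t b c)
     (lin4 Uc Vc Pc Qc s t b c) (lin4 Ud Vd Pd Qd s t b c) l).
Proof.
move=> H.
have [Pa0 Pd0] : Pa = 0 /\ Pd = 0.
  apply: A_lemma => l hl.
    have h := H 0 0 1 0 l; simp h; move/h: hl; apply: Zlem; by rewrite mulr0.
  have h := H 0 0 (-1) 0 l; simp h; move/h: hl; rewrite oppr0; apply: Zlem; by rewrite mulr0.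
have [Qa0 Qd0] : Qa = 0 /\ Qd = 0.
  apply: A_lemma => l hl.
    have h := H 0 0 0 1 l; simp h; move/h: hl; apply: Zlem; by rewrite mul0r.
  have h := H 0 0 0 (-1) l; simp h; move/h: hl; rewrite oppr0; apply: Zlem; by rewrite mul0r.
have [Ua1 Ud1] : Ua = 1 /\ Ud = 1.
  apply: A_lemma => l hl.
    have h := H 1 0 0 0 l; simp h; move/h: hl; apply: Zlem; by rewrite mul0r.
  have h := H (-1) 0 0 0 l; simp h; move/h: hl; apply: Zlem; by rewrite mul0r.
subst Pa Pd Qa Qd Ua Ud.
have B1 := H 0 0 1 1 1; simp B1.
have B2 := H 0 0 1 4 2; simp B2.
have B3 := H 0 0 4 1 2; simp B3.
have ne10 : (1:R) != 0 by rewrite oner_eq0.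
have ne20 : (2:R) != 0 by rewrite pnatr_eq0.
have ne21 : (2:R) != 1 by rewrite pnatr_eq1.
have ne31 : (3:R) != 1 by rewrite pnatr_eq1.
have m1 : Sp (0:R) 1 1 0 1 by apply: memO; lra.
have m2 : Sp (0:R) 1 4 0 2 by apply: memO; lra.
have m3 : Sp (0:R) 4 1 0 2 by apply: memO; lra.
have [e1 [p1 q1]] := O1 (proj2 B1 m1) ne10.
have [e2 _] := O1 (proj2 B2 m2) ne20.
have [e3 _] := O1 (proj2 B3 m3) ne20.
have hbg : (Pb + Qb) * (Pc + Qc) = 1 by lra.
have hbp : 0 < Pb + Qb by lra.
have hgp : 0 < Pc + Qc by lra.
have CB := caseB Pb Pc Qb Qc hbg ltac:(lra) ltac:(lra) hbp.
clear B1 B2 B3 m1 m2 m3 e1 e2 e3 p1 q1.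
have C1 := H 1 0 1 1 2; simp C1.
have C2 := H 1 0 2 2 3; simp C2.
have mc1 : Sp (1:R) 1 1 1 2 by apply: memO; lra.
have mc2 : Sp (1:R) 2 2 1 3 by apply: memO; lra.
have [f1 _] := O1 (proj2 C1 mc1) ne21.
have [f2 _] := O1 (proj2 C2 mc2) ne31.
have [Ub0 Uc0] := caseC Ub Uc (Pb+Qb) (Pc+Qc) ltac:(lra) ltac:(lra) hbg hbp hgp.
subst Ub Uc.
clear C1 C2 mc1 mc2 f1 f2.
have [hVa hVd] : (Va = 1 \/ Va = -1) /\ (Vd = 1 \/ Vd = -1).
  apply: pm1_lemma => l hl.
    have h := H 0 1 0 0 l; simp h; move/h: hl; by move/Sp_b0.
  have h := H 0 (-1) 0 0 l; simp h; move/h: hl; move/Sp_b0; by case; [right|left].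
have Sp_int : forall a b c d l : R, Sp a b c d l -> l <> a -> l <> d -> intP a b c d l.
  by move=> a b c d l [[[? _]|[? _]]|?].
have n2a : (2:R) <> Va by case: hVa => -> ?; lra.
have n2d : (2:R) <> Vd by case: hVd => -> ?; lra.
have n3a : (3:R) <> Va by case: hVa => -> ?; lra.
have n3d : (3:R) <> Vd by case: hVd => -> ?; lra.
have E := H 0 1 (-1) 0 1; simp E.
case: CB => [[hk [pc0 [qb0 [hm hkm]]]]|[pb0 [hk [hm [qc0 hkm]]]]].
- subst Pc Qb.
  have D1 := H 0 1 1 3 2; simp D1.
  have mD1 : Sp (1:R) 1 3 (-1) 2 by apply: memI; lra.
  have D2 := H 0 1 3 1 2; simp D2.
  have mD2 : Sp (1:R) 3 1 (-1) 2 by apply: memI; lra.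
  have D3 := H 0 1 2 4 3; simp D3.
  have mD3 : Sp (1:R) 2 4 (-1) 3 by apply: memI; lra.
  have D4 := H 0 1 1 8 3; simp D4.
  have mD4 : Sp (1:R) 1 8 (-1) 3 by apply: memI; lra.
  have [g1 _] := Sp_int _ _ _ _ _ (proj2 D1 (mD1)) n2a n2d.
  have [g2 _] := Sp_int _ _ _ _ _ (proj2 D2 (mD2)) n2a n2d.
  have [g3 _] := Sp_int _ _ _ _ _ (proj2 D3 (mD3)) n3a n3d.
  have [g4 _] := Sp_int _ _ _ _ _ (proj2 D4 (mD4)) n3a n3d.
  have [Vb0 [Vc0 [sxy pxy]]] := caseD Va Vd Vb Vc Pb Qc
     hkm hk hm ltac:(by rewrite mul1r) ltac:(by rewrite mul1r) ltac:(by []) ltac:(by rewrite mul1r).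
  subst Vb Vc.
  have Va1 : Va = 1.
    case: hVa => // Vam1; exfalso; apply: notSpH; apply/E.
    left; right; split; lra.
  have Vdm1 : Vd = -1 by lra.
  subst Va Vd => s t b c l.
  have -> : lin4 1 1 0 0 s t b c = s + t by rewrite /lin4; ring.
  have -> : lin4 0 0 Pb 0 s t b c = b * Pb by rewrite /lin4; ring.
  have -> : lin4 0 0 0 Qc s t b c = c * Qc by rewrite /lin4; ring.
  have -> : lin4 1 (-1) 0 0 s t b c = s - t by rewrite /lin4; ring.
  exact: finalI.
- subst Pb Qc.
  have D1 := H 0 1 3 1 2; simp D1.
  have mD1 : Sp (1:R) 3 1 (-1) 2 by apply: memI; lra.
  have D2 := H 0 1 1 3 2; simp D2.
  have mD2 : Sp (1:R) 1 3 (-1) 2 by apply: memI; lra.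
  have D3 := H 0 1 4 2 3; simp D3.
  have mD3 : Sp (1:R) 4 2 (-1) 3 by apply: memI; lra.
  have D4 := H 0 1 8 1 3; simp D4.
  have mD4 : Sp (1:R) 8 1 (-1) 3 by apply: memI; lra.
  have [g1 _] := Sp_int _ _ _ _ _ (proj2 D1 (mD1)) n2a n2d.
  have [g2 _] := Sp_int _ _ _ _ _ (proj2 D2 (mD2)) n2a n2d.
  have [g3 _] := Sp_int _ _ _ _ _ (proj2 D3 (mD3)) n3a n3d.
  have [g4 _] := Sp_int _ _ _ _ _ (proj2 D4 (mD4)) n3a n3d.
  have [Vb0 [Vc0 [sxy pxy]]] := caseD Va Vd Vb Vc Qb Pc
     hkm hm hk ltac:(by rewrite mul1r) ltac:(by rewrite mul1r) ltac:(by []) ltac:(by rewrite mul1r).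
  subst Vb Vc.
  have Vam1 : Va = -1.
    case: hVa => // Va1; exfalso; apply: notSpH; apply/E.
    left; left; split; lra.
  have Vd1 : Vd = 1 by lra.
  subst Va Vd => s t b c l.
  have -> : lin4 1 (-1) 0 0 s t b c = s - t by rewrite /lin4; ring.
  have -> : lin4 0 0 0 Qb s t b c = c * Qb by rewrite /lin4; ring.
  have -> : lin4 0 0 Pc 0 s t b c = b * Pc by rewrite /lin4; ring.
  have -> : lin4 1 1 0 0 s t b c = s + t by rewrite /lin4; ring.
  apply: finalII => //; by rewrite mulrC.
Qed.


Lemma sym_main {R : realType} (a b d a' b' d' : R) :
  (forall l, Sp a' b' b' d' l <-> Sp a b b d l) ->
  (forall l, Sp (-a') (-b') (-b') (-d') l <-> Sp (-a) (-b) (-b) (-d) l) ->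
  forall l, (intP a b b d l <-> intP a' b' b' d' l) /\ (bdP a b b d l <-> bdP a' b' b' d' l).
Proof.
move=> h1 h2 l.
have hN : forall l, Ns a' b' b' d' l <-> Ns a b b d l by move=> l'; exact: h2.
rewrite !symR1 !symR2 h1 hN; split; split.
- move=> [s [n u]]; split => //; split => //.
  by move=> l' /h1 s' /hN n'; exact: u.
- move=> [s [n u]]; split => //; split => //.
  by move=> l' /h1 s' /hN n'; exact: u.
- move=> [s o]; split => //; case: o => [o|o]; [by left|right => l'].
  by rewrite h1 hN.
- move=> [s o]; split => //; case: o => [o|o]; [by left|right => l'].
  by rewrite -h1 -hN.
Qed.

Definition BE {R : realType} (a b c d : R) : 'M[R]_2 :=
  \matrix_(i, j) (if i == i0 then (if j == i0 then (a - b - c + d)/2 else (a - b + c - d)/2)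
                  else (if j == i0 then (a + b - c - d)/2 else (a + b + c + d)/2)).

Lemma BE00 {R : realType} (a b c d : R) : BE a b c d i0 i0 = (a - b - c + d)/2.
Proof. by rewrite mxE. Qed.
Lemma BE01 {R : realType} (a b c d : R) : BE a b c d i0 i1 = (a - b + c - d)/2.
Proof. by rewrite mxE. Qed.
Lemma BE10 {R : realType} (a b c d : R) : BE a b c d i1 i0 = (a + b - c - d)/2.
Proof. by rewrite mxE. Qed.
Lemma BE11 {R : realType} (a b c d : R) : BE a b c d i1 i1 = (a + b + c + d)/2.
Proof. by rewrite mxE. Qed.

Lemma coordsBE {R : realType} (a b c d : R) :
  ca (BE a b c d) = a /\ cb (BE a b c d) = b /\ cc (BE a b c d) = c /\ cd (BE a b c d) = d.
Proof. by rewrite /ca /cb /cc /cd !(BE00, BE01, BE10, BE11); do !split; field. Qed.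

Lemma BE_coords {R : realType} (A : 'M[R]_2) : A = BE (ca A) (cb A) (cc A) (cd A).
Proof.
apply/matrixP => i j.
case: (ord2P i) => ->; case: (ord2P j) => ->;
  rewrite ?(BE00, BE01, BE10, BE11) /ca /cb /cc /cd; by field.
Qed.

Lemma BE_lin {R : realType} (s t b c : R) :
  BE (s + t) b c (s - t) = s *: BE 1 0 0 1 + t *: BE 1 0 0 (-1) + b *: BE 0 1 0 0 + c *: BE 0 0 1 0.
Proof.
apply/matrixP => i j; rewrite !mxE.
case: (ord2P i) => ->; case: (ord2P j) => ->; rewrite /=; by field.
Qed.

Lemma coords_lin {R : realType} (A B C D : 'M[R]_2) s t b c :
  let M := s *: A + t *: B + b *: C + c *: D in
  ca M = lin4 (ca A) (ca B) (ca C) (ca D) s t b c /\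
  cb M = lin4 (cb A) (cb B) (cb C) (cb D) s t b c /\
  cc M = lin4 (cc A) (cc B) (cc C) (cc D) s t b c /\
  cd M = lin4 (cd A) (cd B) (cd C) (cd D) s t b c.
Proof. by rewrite /ca /cb /cc /cd /lin4 !mxE; do !split; field. Qed.

Lemma coords_opp {R : realType} (A : 'M[R]_2) :
  ca (- A) = - ca A /\ cb (- A) = - cb A /\ cc (- A) = - cc A /\ cd (- A) = - cd A.
Proof. by rewrite /ca /cb /cc /cd !mxE; do !split; field. Qed.

Lemma sym_coords {R : realType} {A : 'M[R]_2} : A^T = A -> cb A = cc A.
Proof.
move=> h; have e : A i1 i0 = A i0 i1 by rewrite -{1}h mxE.
by rewrite /cb /cc e; field.
Qed.

Lemma sym_opp {R : realType} {A : 'M[R]_2} : A^T = A -> (- A)^T = - A.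
Proof.
move=> h; apply/matrixP => i j; rewrite !mxE.
by rewrite -{1}h mxE.
Qed.

Theorem corollary1p2 (R : realType) (sym : bool)
  (phi : {linear 'M[R]_2 -> 'M[R]_2})
  (hW : forall A, inW2 sym A -> inW2 sym (phi A))
  (hspec : forall A, inW2 sym A -> forall l, L_spec (phi A) l <-> L_spec A l) :
  forall A, inW2 sym A ->
    (forall l, L_spec_int A l <-> L_spec_int (phi A) l) /\
    (forall l, L_spec_bd A l <-> L_spec_bd (phi A) l).
Proof.
move=> A hA.
case: sym hW hspec hA => hW hspec hA.
-
  have hPA := hW A hA; rewrite /inW2 in hA hPA.
  have eA := sym_coords hA; have ePA := sym_coords hPA.
  have h1 : forall l, Sp (ca (phi A)) (cb (phi A)) (cb (phi A)) (cd (phi A)) l <->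
                      Sp (ca A) (cb A) (cb A) (cd A) l.
    by move=> l; rewrite {2}eA {2}ePA -!specE; exact: hspec.
  have h2 : forall l, Sp (- ca (phi A)) (- cb (phi A)) (- cb (phi A)) (- cd (phi A)) l <->
                      Sp (- ca A) (- cb A) (- cb A) (- cd A) l.
    move=> l.
    have := hspec (- A) (sym_opp hA) l; rewrite !specE linearN.
    have [o1 [o2 [o3 o4]]] := coords_opp A; have [p1 [p2 [p3 p4]]] := coords_opp (phi A).
    by rewrite o1 o2 o3 o4 p1 p2 p3 p4 -eA -ePA.
  have M := sym_main _ _ _ _ _ _ h1 h2.
  split => l; rewrite ?intE ?bdE -eA -ePA; by case: (M l).
-
  set U := phi (BE 1 0 0 1); set V := phi (BE 1 0 0 (-1)).
  set P := phi (BE 0 1 0 0); set Q := phi (BE 0 0 1 0).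
  have Hc : forall s t b c, phi (BE (s + t) b c (s - t)) = s *: U + t *: V + b *: P + c *: Q.
    by move=> s t b c; rewrite BE_lin !linearD !linearZ.
  have H : forall s t b c l,
     Sp (lin4 (ca U) (ca V) (ca P) (ca Q) s t b c) (lin4 (cb U) (cb V) (cb P) (cb Q) s t b c)
        (lin4 (cc U) (cc V) (cc P) (cc Q) s t b c) (lin4 (cd U) (cd V) (cd P) (cd Q) s t b c) l
     <-> Sp (s + t) b c (s - t) l.
    move=> s t b c l.
    have := hspec (BE (s + t) b c (s - t)) I l.
    rewrite !specE Hc.
    have [e1 [e2 [e3 e4]]] := coords_lin U V P Q s t b c.
    have [f1 [f2 [f3 f4]]] := coordsBE (s + t) b c (s - t).
    by rewrite e1 e2 e3 e4 f1 f2 f3 f4.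
  have M := @M2_main R _ _ _ _ _ _ _ _ _ _ _ _ _ _ _ _ H.
  pose s := (ca A + cd A) / 2; pose t := (ca A - cd A) / 2.
  have eAs : ca A = s + t by rewrite /s /t; field.
  have eAd : cd A = s - t by rewrite /s /t; field.
  have eA : A = BE (s + t) (cb A) (cc A) (s - t) by rewrite -eAs -eAd -BE_coords.
  have ePA : phi A = s *: U + t *: V + cb A *: P + cc A *: Q by rewrite {1}eA Hc.
  have [e1 [e2 [e3 e4]]] := coords_lin U V P Q s t (cb A) (cc A).
  split => l; rewrite ?intE ?bdE ePA e1 e2 e3 e4 eAs eAd.
    exact: (M s t (cb A) (cc A) l).1.
  exact: (M s t (cb A) (cc A) l).2.
Qed.
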